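(* $V$ is a nuclear space.
   Context: Let $N\ge2$, $\mathbf A$ an $N\times N$ zero-one aperiodic matrix, $\Sigma_{\mathbf A}^+=\{\omega\in\{1,\dots,N\}^{\mathbb N\cup\{0\}}:\mathbf A(\omega_m\omega_{m+1})=1\ \forall m\}$. $\mathrm{var}_m(\phi)=\sup\{|\phi(\omega)-\phi(\omega')|:\omega_k=\omega'_k,\ 0\le k\le m-1\}$; $V=\{\phi:\Sigma_{\mathbf A}^+\to\mathbb C:\mathrm{var}_m(\phi)^{1/m}\to0\}$ with the locally convex topology generated by the norms $\|\phi\|_\theta=\|\phi\|_\infty+[\phi]_\theta$, $\theta\in(0,1)$, $[\phi]_\theta$ the Lipschitz constant w.r.t. $d_\theta(\omega,\omega')=\theta^{\min\{m:\omega_m\ne\omega'_m\}}$. A bounded operator $T:E\to F$ between Banach spaces is nuclear if $Tx=\sum_n\lambda_n\langle x,x_n'\rangle y_n$ with $(\lambda_n)$ summable, $(x'_n)\subset E'$ and $(y_n)\subset F$ bounded. A locally convex Hausdorff space $X$ is nuclear if for every continuous seminorm $p$ there is a continuous seminorm $q\ge p$ such that the natural map $\widehat X_q\to\widehat X_p$ is nuclear, where $\widehat X_p$ is the completion of $X/\ker p$ w.r.t. $p$. *)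

(* Defs.v *)
From HB Require Import structures.
From mathcomp Require Import all_boot all_order all_algebra.
From mathcomp Require Import boolp classical_sets reals.
From mathcomp Require Import complex.
Set Implicit Arguments. Unset Strict Implicit. Unset Printing Implicit Defensive.
Import Order.TTheory GRing.Theory Num.Theory.
Local Open Scope ring_scope.
Local Open Scope classical_set_scope.

(* Alphabet {1,...,N} is represented by 'I_N (shift by one); N = n.+2 >= 2. *)

Definition zero_one (N : nat) (A : 'M[int]_N) : Prop :=
  forall i j, A i j = 0 \/ A i j = 1.

Definition aperiodic (n : nat) (A : 'M[int]_(n.+2)) : Prop :=
  exists k : nat, forall i j, 0 < (A ^+ k) i j.

Definition Sigma (N : nat) (A : 'M[int]_N) :=
  {w : nat -> 'I_N | forall m, A (w m) (w m.+1) = 1}.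


Definition cabs (R : realType) (z : R[i]) : R :=
  Num.sqrt (complex.Re z ^+ 2 + complex.Im z ^+ 2).

Section Space.
Variables (R : realType) (N : nat) (A : 'M[int]_N).
Local Notation S := (Sigma A).
Local Notation C := (R[i]).

Definition var_le (phi : S -> C) (m : nat) (c : R) : Prop :=
  forall w w' : S, (forall k, (k < m)%N -> proj1_sig w k = proj1_sig w' k) ->
    cabs (phi w - phi w') <= c.

(* phi \in V  :<=>  var_m(phi)^(1/m) --> 0, i.e.
   for every eps > 0, eventually var_m(phi) <= eps^m *)
Definition inV (phi : S -> C) : Prop :=
  forall eps : R, 0 < eps ->
    exists M : nat, forall m, (M <= m)%N -> var_le phi m (eps ^+ m).

(* min{m : w_m <> w'_m} (0 if w = w'; only used for w <> w') *)
Definition firstdiff (w w' : S) : nat :=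
  match pselect (exists m, proj1_sig w m != proj1_sig w' m) with
  | left H => ex_minn H
  | right _ => 0%N
  end.

Definition dtheta (theta : R) (w w' : S) : R := theta ^+ firstdiff w w'.

Definition supnorm (phi : S -> C) : R :=
  sup [set cabs (phi w) | w in [set: S]].

Definition lipconst (theta : R) (phi : S -> C) : R :=
  sup [set r | exists w w' : S, w <> w' /\
                 r = cabs (phi w - phi w') / dtheta theta w w'].

Definition normtheta (theta : R) (phi : S -> C) : R :=
  supnorm phi + lipconst theta phi.

Definition seminormV (p : (S -> C) -> R) : Prop :=
  (forall phi, inV phi -> 0 <= p phi) /\
  (forall phi psi, inV phi -> inV psi -> p (phi \+ psi) <= p phi + p psi) /\
  (forall (c : C) phi, inV phi -> p (fun w => c * phi w) = cabs c * p phi).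

(* continuity w.r.t. the locally convex topology generated by the norms
   ||.||_theta, theta in (0,1): domination by finitely many of them *)
Definition continuous_seminorm (p : (S -> C) -> R) : Prop :=
  seminormV p /\
  exists (thetas : seq R) (K : R),
    all (fun t => (0 < t) && (t < 1)) thetas /\
    forall phi, inV phi -> p phi <= K * \sum_(t <- thetas) normtheta t phi.

(* The natural map from hat{V}_q to hat{V}_p is nuclear.
   Unfolded: there are (lambda_n) absolutely summable, functionals x'_n
   (linear on V, |x'_n phi| <= B q(phi), so they extend to a bounded sequence
   in the dual of hat{V}_q), and a bounded sequence y_n in hat{V}_p, each
   y_n represented by a p-Cauchy sequence (y n k)_k of elements of V, with
     iota(phi) = sum_n lambda_n <phi, x'_n> y_n  in hat{V}_p  for phi in V
   (which determines the map on hat{V}_q by density and continuity). *)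
Definition nuclear_natural_map (q p : (S -> C) -> R) : Prop :=
  exists (lam : nat -> C) (x' : nat -> (S -> C) -> C)
         (y : nat -> nat -> S -> C),
    (exists L : R, forall M, \sum_(i < M) cabs (lam i) <= L) /\
    (forall i, (forall phi psi, inV phi -> inV psi ->
                  x' i (phi \+ psi) = x' i phi + x' i psi) /\
               (forall (c : C) phi, inV phi ->
                  x' i (fun w => c * phi w) = c * x' i phi)) /\
    (exists B : R, forall i phi, inV phi -> cabs (x' i phi) <= B * q phi) /\
    (forall i k, inV (y i k)) /\
    (forall i (eps : R), 0 < eps -> exists K, forall k l, (K <= k)%N -> (K <= l)%N ->
        p (y i k \- y i l) <= eps) /\
    (exists B' : R, forall i, exists K, forall k, (K <= k)%N -> p (y i k) <= B') /\
    (forall phi, inV phi -> forall eps : R, 0 < eps ->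
       exists M0, forall M, (M0 <= M)%N -> exists K, forall k, (K <= k)%N ->
         p (fun w => phi w - \sum_(i < M) lam i * x' i phi * y i k w) <= eps).

Definition V_nuclear : Prop :=
  forall p, continuous_seminorm p ->
    exists q, continuous_seminorm q /\ (forall phi, inV phi -> p phi <= q phi) /\
      nuclear_natural_map q p.

End Space.

(* Main.v *)
Require Import Defs.
Require Import Defs.
From HB Require Import structures.
From mathcomp Require Import all_boot all_order all_algebra.
From mathcomp Require Import boolp classical_sets reals complex.
From mathcomp Require Import ring lra.
Set Implicit Arguments. Unset Strict Implicit. Unset Printing Implicit Defensive.
Import Order.TTheory GRing.Theory Num.Theory.
Local Open Scope ring_scope.
Local Open Scope classical_set_scope.

Section Cabs.
Variable R : realType.
Implicit Types x y : R[i].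
Lemma cabsE x : cabs x = Normc.normc x. Proof. by case: x. Qed.
Lemma cabsD x y : cabs (x + y) <= cabs x + cabs y.
Proof. rewrite !cabsE; exact: le_normcD. Qed.
Lemma cabsM x y : cabs (x * y) = cabs x * cabs y.
Proof. rewrite !cabsE; exact: Normc.normcM. Qed.
Lemma cabsN x : cabs (- x) = cabs x.
Proof. rewrite !cabsE; exact: normcN. Qed.
Lemma cabs_ge0 x : 0 <= cabs x.
Proof. case: x => a b; rewrite /cabs /=; exact: sqrtr_ge0. Qed.
Lemma cabs0 : cabs (0 : R[i]) = 0.
Proof. by rewrite cabsE Normc.normc0. Qed.
Lemma cabsR (r : R) : cabs ((r%:C)%C) = `|r|.
Proof. by rewrite /cabs /= expr0n /= addr0 sqrtr_sqr. Qed.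
Lemma cabsB x y : cabs (x - y) <= cabs x + cabs y.
Proof. by rewrite -(cabsN y) cabsD. Qed.
Lemma cabsV x : cabs (x^-1) = (cabs x)^-1.
Proof. rewrite !cabsE; exact: Normc.normcV. Qed.
End Cabs.

Section SupLemmas.
Variable R : realType.
Implicit Types E : set R.

Lemma sup_le_c E c : 0 <= c -> (forall x, E x -> x <= c) -> sup E <= c.
Proof.
move=> c0 H; case: (pselect (E !=set0)) => [ne|ne].
  by apply: ge_sup => // x /H.
by rewrite sup_out // => -[].
Qed.

Lemma sup_ge0' E : (forall x, E x -> 0 <= x) -> 0 <= sup E.
Proof.
move=> H; case: (pselect (has_sup E)) => [[[x Ex] ub]|ns]; last by rewrite sup_out.
exact: le_trans (H x Ex) (ub_le_sup ub Ex).
Qed.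

Lemma le_sup' E x : has_ubound E -> E x -> x <= sup E.
Proof. by move=> ub Ex; apply: ub_le_sup. Qed.
End SupLemmas.

Section GenSup.
Variables (R : realType) (S : Type) (I : Type) (P : I -> Prop)
  (L : I -> (S -> R[i]) -> R[i]) (wt : I -> R).
Hypothesis wt_gt0 : forall i, 0 < wt i.
Hypothesis LD : forall i f g, L i (f \+ g) = L i f + L i g.
Hypothesis LZ : forall i (c : R[i]) f, L i (fun w => c * f w) = c * L i f.

Definition GE (f : S -> R[i]) := [set r | exists i, P i /\ r = cabs (L i f) / wt i].
Definition GS f := sup (GE f).

Lemma GE_ge0 f x : GE f x -> 0 <= x.
Proof. by case=> i [_ ->]; rewrite divr_ge0 ?cabs_ge0 // ltW. Qed.

Lemma GS_ge0 f : 0 <= GS f.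
Proof. exact/sup_ge0'/GE_ge0. Qed.

Lemma GS_le f i : has_ubound (GE f) -> P i -> cabs (L i f) <= GS f * wt i.
Proof.
move=> ub Pi; rewrite -ler_pdivrMr //; apply: le_sup' => //; by exists i.
Qed.

Lemma GS_D f g : has_ubound (GE f) -> has_ubound (GE g) -> GS (f \+ g) <= GS f + GS g.
Proof.
move=> uf ug; apply: sup_le_c; first by rewrite addr_ge0 ?GS_ge0.
move=> x [i [Pi ->]]; rewrite ler_pdivrMr // LD mulrDl.
apply: le_trans (cabsD _ _) _; apply: lerD; exact: GS_le.
Qed.

Lemma GZ_ub (c : R[i]) f : has_ubound (GE f) -> has_ubound (GE (fun w => c * f w)).
Proof.
move=> uf; exists (cabs c * GS f) => x [i [Pi ->]].
rewrite ler_pdivrMr // LZ cabsM -mulrA; apply: ler_wpM2l; first exact: cabs_ge0.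
exact: GS_le.
Qed.

Lemma GS_Z (c : R[i]) f : has_ubound (GE f) -> GS (fun w => c * f w) = cabs c * GS f.
Proof.
move=> uf; apply/eqP; rewrite eq_le; apply/andP; split.
  apply: sup_le_c; first by rewrite mulr_ge0 ?cabs_ge0 ?GS_ge0.
  move=> x [i [Pi ->]]; rewrite ler_pdivrMr // LZ cabsM -mulrA.
  by apply: ler_wpM2l; [exact: cabs_ge0| exact: GS_le].
have [->|c0] := eqVneq c 0; first by rewrite cabs0 mul0r GS_ge0.
have cp : 0 < cabs c.
  rewrite lt_def cabs_ge0 andbT; apply/eqP => /eqP.
  by rewrite cabsE => /eqP/Normc.eq0_normc; apply/eqP.
rewrite mulrC -ler_pdivlMr //; apply: sup_le_c.
  by rewrite divr_ge0 ?GS_ge0 // ltW.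
move=> x Ex; rewrite ler_pdivlMr //.
case: Ex => i [Pi ->].
have := le_sup' (GZ_ub c uf) (ex_intro _ i (conj Pi erefl)).
rewrite LZ cabsM => H; apply: le_trans H; rewrite le_eqVlt; apply/orP; left; apply/eqP; ring.
Qed.
End GenSup.

Section Main.
Variables (R : realType) (n : nat) (A : 'M[int]_(n.+2)).
Local Notation N := n.+2.
Local Notation S := (Sigma A).
Local Notation C := (R[i]).

Definition prefix m (w : S) : seq 'I_N := [seq sval w k | k <- iota 0 m].

Lemma size_prefix m w : size (prefix m w) = m.
Proof. by rewrite size_map size_iota. Qed.

Lemma prefixP m w w' : prefix m w = prefix m w' <->
  (forall k, (k < m)%N -> sval w k = sval w' k).
Proof.
split => [/eq_in_map H k km | H].
  by apply: H; rewrite mem_iota.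
by apply/eq_in_map => k; rewrite mem_iota => /andP[_ km]; apply: H.
Qed.

Lemma take_prefix m w : take m (prefix m.+1 w) = prefix m w.
Proof. by rewrite /prefix -map_take take_iota (minn_idPl (leqnSn m)). Qed.

Lemma sig_neq (w w' : S) : w <> w' -> exists m, sval w m != sval w' m.
Proof.
move=> ne; apply: contrapT => H; apply: ne.
case: w w' H => [f Hf] [g Hg] /= H.
have fg : f = g.
  apply: funext => m; apply/eqP; apply: contrapT => Hm; apply: H; exists m.
  exact/negP.
subst g; congr exist; exact: Prop_irrelevance.
Qed.

Lemma fd_lt (w w' : S) k : (k < firstdiff w w')%N -> sval w k = sval w' k.
Proof.
rewrite /firstdiff; case: pselect => [H|_] //.
case: ex_minnP => m Hm Hmin km; apply/eqP; apply: contraTT km.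
by move/Hmin; rewrite leqNgt.
Qed.

Lemma fd_ge j (w w' : S) : w <> w' -> (forall k, (k < j)%N -> sval w k = sval w' k) ->
  (j <= firstdiff w w')%N.
Proof.
move=> ne E; rewrite /firstdiff; case: pselect => [H|H]; last by case: H; apply: sig_neq.
case: ex_minnP => m Hm _; rewrite leqNgt; apply/negP => mj.
by move: Hm; rewrite (E m mj) eqxx.
Qed.

Lemma var_fd (phi : S -> C) (w w' : S) c : var_le phi (firstdiff w w') c ->
  cabs (phi w - phi w') <= c.
Proof. by move=> H; apply: H => k; apply: fd_lt. Qed.

Definition repo m (s : seq 'I_N) : option S :=
  match pselect (exists w : S, prefix m w = s) with
  | left H => Some (sval (cid H))
  | right _ => None
  end.

Lemma repo_some m s r : repo m s = Some r -> prefix m r = s.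
Proof.
rewrite /repo; case: pselect => // H [<-]; exact: (svalP (cid H)).
Qed.

Lemma repo_pre m s (w : S) : prefix m w = s -> exists r, repo m s = Some r.
Proof.
rewrite /repo; case: pselect => [H|H] E; first by eexists.
by case: H; exists w.
Qed.

Definition valo (phi : S -> C) (o : option S) : C :=
  if o is Some r then phi r else 0.

Definition Dm m (s : seq 'I_N) (phi : S -> C) : C :=
  match repo m s with
  | None => 0
  | Some r => phi r - (if m is m'.+1 then valo phi (repo m' (take m' s)) else 0)
  end.

Definition Em m (phi : S -> C) (w : S) : C := valo phi (repo m (prefix m w)).
Definition Eb b (phi : S -> C) (w : S) : C := if b is b'.+1 then Em b' phi w else 0.

Definition ind m (s : seq 'I_N) (w : S) : C := if prefix m w == s then 1 else 0.

Lemma Em_rep m phi w : exists r, Em m phi w = phi r /\ prefix m r = prefix m w.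
Proof.
have [r Hr] := repo_pre (erefl (prefix m w)).
by exists r; rewrite /Em Hr; split => //; apply: repo_some.
Qed.

Lemma Em_loc m phi w w' : prefix m w = prefix m w' -> Em m phi w = Em m phi w'.
Proof. by rewrite /Em => ->. Qed.

Lemma Dm_lin m s phi psi : Dm m s (phi \+ psi) = Dm m s phi + Dm m s psi.
Proof.
rewrite /Dm; case: (repo m s) => [r|]; last by rewrite addr0.
case: m => [|m]; first by rewrite /= !subr0.
case: (repo m (take m s)) => [r'|] /=; ring.
Qed.

Lemma Dm_scale m s (c : C) phi : Dm m s (fun w => c * phi w) = c * Dm m s phi.
Proof.
rewrite /Dm; case: (repo m s) => [r|]; last by rewrite mulr0.
case: m => [|m]; first by rewrite /= !subr0.
case: (repo m (take m s)) => [r'|] /=; ring.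
Qed.

Definition tpre m (w : S) : m.-tuple 'I_N := Tuple (introT eqP (size_prefix m w)).

Lemma block_id m phi w :
  \sum_(t : m.-tuple 'I_N) Dm m t phi * ind m t w = Em m phi w - Eb m phi w.
Proof.
rewrite (bigD1 (tpre m w)) //= big1 ?addr0; last first.
  move=> t ne; rewrite /ind; case: eqP => [E|_]; last by rewrite mulr0.
  by case/eqP: ne; apply: val_inj; rewrite /= E.
rewrite /ind eqxx mulr1 /Dm /Em.
have [r Hr] := repo_pre (erefl (prefix m w)); rewrite Hr.
by case: m r Hr => [|m] r Hr //=; rewrite /Em take_prefix.
Qed.

Lemma telescope b phi w : \sum_(m < b) (Em m phi w - Eb m phi w) = Eb b phi w.
Proof.
elim: b => [|b IH]; first by rewrite big_ord0.
rewrite big_ord_recr /= IH; ring.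
Qed.


Lemma inV_loc (f : S -> C) j :
  (forall w w', prefix j w = prefix j w' -> f w = f w') -> inV f.
Proof.
move=> H eps e0; exists j => m jm w w' E.
rewrite (H w w') ?subrr ?cabs0 ?exprn_ge0 ?ltW //.
by apply/prefixP => k kj; apply: E; apply: leq_trans jm.
Qed.

Lemma powdiv (e k : R) m : 0 <= e -> 1 <= k -> (0 < m)%N -> k * (e / k) ^+ m <= e ^+ m.
Proof.
move=> e0 k1; case: m => // m _.
have k0 : 0 < k by apply: lt_le_trans k1; exact: ltr01.
have ek : e / k <= e by rewrite ler_pdivrMr // ler_peMr.
rewrite exprS mulrA (mulrC k) divfK ?gt_eqF // exprS ler_wpM2l //.
by apply: lerXn2r => //; rewrite nnegrE ?divr_ge0 // ltW.
Qed.

Lemma var_le_add (phi psi : S -> C) m a b : var_le phi m a -> var_le psi m b ->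
  var_le (phi \+ psi) m (a + b).
Proof.
move=> H1 H2 w w' E; apply: le_trans (_ : cabs ((phi w - phi w') + (psi w - psi w')) <= _).
  by rewrite le_eqVlt; apply/orP; left; apply/eqP; congr cabs => /=; ring.
by apply: le_trans (cabsD _ _) _; apply: lerD; [apply: H1|apply: H2].
Qed.

Lemma inV_add (phi psi : S -> C) : inV phi -> inV psi -> inV (phi \+ psi).
Proof.
move=> Hp Hq eps e0.
have e2 : 0 < eps / 2 by rewrite divr_gt0.
have [M1 H1] := Hp _ e2; have [M2 H2] := Hq _ e2.
exists (maxn (maxn M1 M2) 1) => m; rewrite !geq_max => /andP[/andP[m1 m2] m0].
have := var_le_add (H1 m m1) (H2 m m2).
move=> H w w' E; apply: le_trans (H w w' E) _.
have h2 : 1 <= (2:R) by lra.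
have := powdiv (ltW e0) h2 m0; set x := (_ / _) ^+ m; lra.
Qed.

Lemma inV_scale (c : C) (phi : S -> C) : inV phi -> inV (fun w => c * phi w).
Proof.
move=> Hp eps e0; set k := cabs c + 1.
have k1 : 1 <= k by rewrite lerDr cabs_ge0.
have k0 : 0 < k by apply: lt_le_trans k1; exact: ltr01.
have [M H] := Hp (eps / k) (divr_gt0 e0 k0).
exists (maxn M 1) => m; rewrite geq_max => /andP[mM m0] w w' E.
rewrite -mulrBr cabsM.
apply: le_trans (_ : k * (eps / k) ^+ m <= _); last exact: powdiv (ltW e0) k1 m0.
apply: ler_pM; [exact: cabs_ge0|exact: cabs_ge0| |exact: H].
by rewrite lerDl ler01.
Qed.

Lemma inV_bounded (phi : S -> C) : inV phi -> exists B, 0 <= B /\ forall w, cabs (phi w) <= B.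
Proof.
move=> Hp; have [M H] := Hp 1 ltr01.
exists (1 + \sum_(t : M.-tuple 'I_N) cabs (valo phi (repo M t))); split.
  by apply: addr_ge0; [exact: ler01| apply: sumr_ge0 => t _; apply: cabs_ge0].
move=> w.
have [r [Er Pr]] := Em_rep M phi w.
have -> : phi w = (phi w - phi r) + phi r by ring.
apply: le_trans (cabsD _ _) _; apply: lerD.
  rewrite -(expr1n _ M); apply: (H M (leqnn M)) => k kM.
  by move/prefixP: Pr => ->.
rewrite -Er /Em (bigD1 (tpre M w)) //= lerDl.
by apply: sumr_ge0 => t _; apply: cabs_ge0.
Qed.

Definition Lsup (w : S) (f : S -> C) : C := f w.
Definition Llip (p : S * S) (f : S -> C) : C := f p.1 - f p.2.
Definition Plip (p : S * S) : Prop := p.1 <> p.2.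
Definition wlip (t : R) (p : S * S) : R := dtheta t p.1 p.2.

Lemma supnormE phi : supnorm phi = GS (fun _ : S => True) Lsup (fun _ => 1) phi.
Proof.
rewrite /supnorm /GS; congr sup; apply/seteqP; split => r /=.
  by case=> w _ <-; exists w; split => //; rewrite divr1.
by case=> w [_ ->]; exists w => //; rewrite divr1.
Qed.

Lemma lipconstE t phi : lipconst t phi = GS Plip Llip (wlip t) phi.
Proof.
rewrite /lipconst /GS; congr sup; apply/seteqP; split => r /=.
  by case=> w [w' [ne ->]]; exists (w, w').
by case=> [[w w']] [ne ->]; exists w, w'.
Qed.

Lemma wsup_gt0 (w : S) : 0 < (fun _ : S => (1 : R)) w. Proof. exact: ltr01. Qed.
Lemma wlip_gt0 t : 0 < t -> forall p, 0 < wlip t p.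
Proof. by move=> t0 p; rewrite /wlip /dtheta exprn_gt0. Qed.
Lemma Lsup_D w (f g : S -> C) : Lsup w (f \+ g) = Lsup w f + Lsup w g. Proof. by []. Qed.
Lemma Lsup_Z w (c : C) (f : S -> C) : Lsup w (fun x => c * f x) = c * Lsup w f. Proof. by []. Qed.
Lemma Llip_D p (f g : S -> C) : Llip p (f \+ g) = Llip p f + Llip p g.
Proof. rewrite /Llip /=; ring. Qed.
Lemma Llip_Z p (c : C) (f : S -> C) : Llip p (fun x => c * f x) = c * Llip p f.
Proof. rewrite /Llip /=; ring. Qed.

Lemma sup_ub (phi : S -> C) : inV phi -> has_ubound (GE (fun _ : S => True) Lsup (fun _ => 1) phi).
Proof.
move=> /inV_bounded [B [_ HB]]; exists B => x [w [_ ->]]; rewrite divr1; exact: HB.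
Qed.

Lemma lip_ub t (phi : S -> C) : 0 < t -> t < 1 -> inV phi -> has_ubound (GE Plip Llip (wlip t) phi).
Proof.
move=> t0 t1 Hp; have [B [B0 HB]] := inV_bounded Hp; have [M HM] := Hp t t0.
exists (1 + 2 * B / t ^+ M) => x [[w w']] [/= ne ->].
rewrite /wlip /dtheta /Llip /=.
set d := firstdiff w w'.
have td : 0 < t ^+ d by rewrite exprn_gt0.
have tM : 0 < t ^+ M by rewrite exprn_gt0.
case: (leqP M d) => Md.
  have h0 : 0 <= 2 * B / t ^+ M by rewrite divr_ge0 ?mulr_ge0 ?ler0n // ltW.
  apply: le_trans (_ : 1 <= _); last by lra.
  rewrite ler_pdivrMr // mul1r; exact: var_fd (HM d Md).
apply: le_trans (_ : 2 * B / t ^+ M <= _); last by rewrite lerDr ler01.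
apply: le_trans (_ : 2 * B / t ^+ d <= _).
  rewrite ler_pdivrMr // divfK ?gt_eqF //.
  apply: le_trans (cabsB _ _) _; rewrite mulr2n mulrDl mul1r; apply: lerD; exact: HB.
rewrite ler_wpM2l ?mulr_ge0 // lef_pV2 ?posrE //.
by apply: ler_wiXn2l; [exact: ltW|exact: ltW|exact: ltnW].
Qed.

Lemma normtheta_ge0 t (phi : S -> C) : 0 < t -> 0 <= normtheta t phi.
Proof.
move=> t0; rewrite /normtheta supnormE lipconstE.
by apply: addr_ge0; apply: GS_ge0; [exact: wsup_gt0|exact: wlip_gt0].
Qed.

Lemma normtheta_seminorm t : 0 < t -> t < 1 -> @seminormV R _ A (normtheta t).
Proof.
move=> t0 t1; split; first by move=> phi _; exact: normtheta_ge0.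
split.
  move=> phi psi Hp Hq; rewrite /normtheta !supnormE !lipconstE.
  have h1 := GS_D wsup_gt0 Lsup_D (sup_ub Hp) (sup_ub Hq).
  have h2 := GS_D (wlip_gt0 t0) Llip_D (lip_ub t0 t1 Hp) (lip_ub t0 t1 Hq).
  lra.
move=> c phi Hp; rewrite /normtheta !supnormE !lipconstE.
rewrite (GS_Z wsup_gt0 Lsup_Z c (sup_ub Hp)).
rewrite (GS_Z (wlip_gt0 t0) Llip_Z c (lip_ub t0 t1 Hp)); ring.
Qed.


Definition Cb m : nat := \sum_(j < m) N ^ j.

Lemma CbS m : Cb m.+1 = (Cb m + N ^ m)%N.
Proof. by rewrite /Cb big_ord_recr. Qed.

Lemma Cb_le m m' : (m <= m')%N -> (Cb m <= Cb m')%N.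
Proof.
elim: m' => [|m' IH]; first by rewrite leqn0 => /eqP ->.
rewrite leq_eqVlt => /orP[/eqP -> //|]; rewrite ltnS => /IH h.
by rewrite CbS; apply: leq_trans h (leq_addr _ _).
Qed.

Lemma Cb_ge m : (m <= Cb m)%N.
Proof.
elim: m => // m IH; rewrite CbS -addn1 leq_add //.
by rewrite expn_gt0.
Qed.

Lemma blk_ex i : exists m, (i < Cb m.+1)%N.
Proof. by exists i; apply: leq_trans (Cb_ge i.+1). Qed.

Definition blk i : nat := ex_minn (blk_ex i).

Lemma blkP i : (Cb (blk i) <= i < Cb (blk i).+1)%N.
Proof.
rewrite /blk; case: ex_minnP => m Hm Hmin; rewrite Hm andbT.
case: m Hm Hmin => [|m] Hm Hmin; first by rewrite /Cb big_ord0.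
rewrite leqNgt; apply/negP => /Hmin.
by rewrite ltnn.
Qed.

Lemma blk_eq m i : (Cb m <= i < Cb m.+1)%N -> blk i = m.
Proof.
move=> /andP[h1 h2]; have /andP[h3 h4] := blkP i.
case: (ltngtP (blk i) m) => // H.
  have := leq_trans h4 (Cb_le H); rewrite leqNgt; move/negP; case.
  by rewrite ltnS.
have := leq_trans h2 (Cb_le H); rewrite leqNgt; move/negP; case.
by rewrite ltnS.
Qed.

Definition tup m j : m.-tuple 'I_N := nth (nseq_tuple m ord0) (enum {: m.-tuple 'I_N}) j.
Definition wd i : seq 'I_N := tval (tup (blk i) (i - Cb (blk i))).

Lemma block_sum (V : nmodType) (F : nat -> seq 'I_N -> V) m :
  \sum_(Cb m <= i < Cb m.+1) F (blk i) (wd i) = \sum_(t : m.-tuple 'I_N) F m t.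
Proof.
rewrite CbS -{1}(add0n (Cb m)) big_addn addKn.
rewrite (eq_big_nat _ _ (F2 := fun i => F m (tval (tup m i)))); last first.
  move=> i /andP[_ hi].
  have e : blk (i + Cb m) = m.
    by apply: blk_eq; rewrite CbS leq_addl /= addnC ltn_add2l.
  by rewrite /wd e addnK.
rewrite -big_enum (big_nth (nseq_tuple m ord0)) -cardE card_tuple card_ord.
by [].
Qed.

Lemma sum_blocks (V : nmodType) (G : nat -> V) b :
  \sum_(i < Cb b) G i = \sum_(m < b) \sum_(Cb m <= i < Cb m.+1) G i.
Proof.
elim: b => [|b IH]; first by rewrite big_ord0 /Cb big_ord0 big_ord0.
rewrite big_ord_recr /= -IH -!(big_mkord xpredT) (@big_cat_nat _ _ _ (Cb b)) //.
exact: Cb_le.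
Qed.


Section Params.
Variables (th th' : R).
Hypotheses (th0 : 0 < th) (th1 : th < 1) (th'0 : 0 < th') (th'1 : th' < 1).
Hypothesis thr : th' / th * N%:R <= 1 / 2.

Definition lam i : C := (((th' / th) ^+ blk i)%:C)%C.
Definition xp i (phi : S -> C) : C := Dm (blk i) (wd i) phi / (((th' ^+ blk i)%:C)%C).
Definition yy i : S -> C := fun w => (((th ^+ blk i)%:C)%C) * ind (blk i) (wd i) w.

Lemma term_eq i phi w :
  lam i * xp i phi * yy i w = Dm (blk i) (wd i) phi * ind (blk i) (wd i) w.
Proof.
rewrite /lam /xp /yy; set m := blk i.
have e : (((th' / th) ^+ m)%:C)%C * (((th' ^+ m)%:C)%C)^-1 * (((th ^+ m)%:C)%C) = 1 :> C.
  rewrite -fmorphV -!rmorphM /=; congr ((_)%:C)%C.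
  rewrite expr_div_n; field; apply/andP; split; apply: expf_neq0; exact: lt0r_neq0.
transitivity (Dm m (wd i) phi * ind m (wd i) w *
  ((((th' / th) ^+ m)%:C)%C * (((th' ^+ m)%:C)%C)^-1 * (((th ^+ m)%:C)%C))); first ring.
by rewrite e mulr1.
Qed.

Lemma sum_terms b phi w : \sum_(i < Cb b) lam i * xp i phi * yy i w = Eb b phi w.
Proof.
under eq_bigr => i _ do rewrite term_eq.
rewrite (sum_blocks (fun i => Dm (blk i) (wd i) phi * ind (blk i) (wd i) w)) -(telescope b phi w); apply: eq_bigr => m _.
rewrite -block_id.
exact: (block_sum (fun m s => Dm m s phi * ind m s w)).
Qed.

Lemma cabs_lam i : cabs (lam i) = (th' / th) ^+ blk i.
Proof. by rewrite /lam cabsR ger0_norm // exprn_ge0 // divr_ge0 // ltW. Qed.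

Lemma geo M : \sum_(m < M) (1 / 2 : R) ^+ m <= 2.
Proof.
suff : \sum_(m < M) (1 / 2 : R) ^+ m + 2 * (1 / 2) ^+ M = 2.
  have h : 0 <= (1 / 2 : R) ^+ M by rewrite exprn_ge0 // divr_ge0.
  move: h; set x := (1 / 2 : R) ^+ M; set s := \sum_(m < M) _; lra.
elim: M => [|M IH]; first by rewrite big_ord0 expr0; lra.
rewrite big_ord_recr /= exprS; move: IH; set x := (1 / 2 : R) ^+ M; lra.
Qed.

Lemma block_lam m : \sum_(Cb m <= i < Cb m.+1) cabs (lam i) <= (1 / 2) ^+ m.
Proof.
under eq_big_nat => i _ do rewrite cabs_lam.
rewrite (block_sum (fun m (_ : seq 'I_N) => (th' / th) ^+ m)).
rewrite sumr_const card_tuple card_ord -[(th' / th) ^+ m *+ _]mulr_natl natrX -exprMn.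
apply: lerXn2r; [rewrite nnegrE mulr_ge0 // divr_ge0 // ltW // | rewrite nnegrE divr_ge0 // | by rewrite mulrC].
Qed.

Lemma sum_le_Cb (f : nat -> R) M : (forall i, 0 <= f i) ->
  \sum_(i < M) f i <= \sum_(i < Cb M) f i.
Proof.
move=> f0; rewrite (big_ord_widen (Cb M) _ (Cb_ge M)).
rewrite [X in _ <= X](bigID (fun i : 'I__ => (i < M)%N)) /= lerDl.
by apply: sumr_ge0 => i _.
Qed.

Lemma lam_sum M : \sum_(i < M) cabs (lam i) <= 2.
Proof.
apply: le_trans (@sum_le_Cb (fun i => cabs (lam i)) M (fun i => cabs_ge0 _)) _.
rewrite (sum_blocks (fun i => cabs (lam i))); apply: le_trans (geo M); apply: ler_sum => m _.
exact: block_lam.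
Qed.


Lemma cabs_divR (x : C) (y : R) : 0 < y -> cabs (x / ((y%:C)%C)) = cabs x / y.
Proof. by move=> y0; rewrite cabsM cabsV cabsR ger0_norm // ltW. Qed.

Lemma lip_diff t (phi : S -> C) (w w' : S) j : 0 < t -> t < 1 -> inV phi ->
  (forall k, (k < j)%N -> sval w k = sval w' k) ->
  cabs (phi w - phi w') <= lipconst t phi * t ^+ j.
Proof.
move=> t0 t1 Hp E; have l0 : 0 <= lipconst t phi.
  by rewrite lipconstE; apply: GS_ge0; exact: wlip_gt0.
case: (pselect (w = w')) => [<-|ne].
  by rewrite subrr cabs0 mulr_ge0 // exprn_ge0 // ltW.
have := GS_le (wlip_gt0 t0) (lip_ub t0 t1 Hp) (ne : Plip (w, w')).
rewrite -lipconstE /wlip /dtheta /Llip /= => h; apply: le_trans h _.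
apply: ler_wpM2l => //; apply: ler_wiXn2l; [exact: ltW|exact: ltW|].
exact: fd_ge.
Qed.

Lemma sup_elem (phi : S -> C) w : inV phi -> cabs (phi w) <= supnorm phi.
Proof.
move=> Hp; have := GS_le wsup_gt0 (sup_ub Hp) (I : (fun _ : S => True) w).
by rewrite -supnormE mulr1.
Qed.

Lemma supnorm_ge0 (phi : S -> C) : 0 <= supnorm phi.
Proof. rewrite supnormE; apply: GS_ge0; exact: wsup_gt0. Qed.

Lemma lipconst_ge0 t (phi : S -> C) : 0 < t -> 0 <= lipconst t phi.
Proof. by move=> t0; rewrite lipconstE; apply: GS_ge0; exact: wlip_gt0. Qed.

Lemma xp_bound i (phi : S -> C) : inV phi -> cabs (xp i phi) <= normtheta th' phi / th'.
Proof.
move=> Hp; have n0 : 0 <= normtheta th' phi / th'.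
  by rewrite divr_ge0 ?normtheta_ge0 // ltW.
rewrite /xp cabs_divR ?exprn_gt0 //; set m := blk i; set s := wd i.
rewrite /Dm; case E: (repo m s) => [r|]; last by rewrite cabs0 mul0r.
have Pr := repo_some E.
have s0 := supnorm_ge0 phi; have l0 := lipconst_ge0 phi th'0.
case: m E Pr => [|m] E Pr.
  rewrite subr0 expr0 divr1; apply: le_trans (sup_elem r Hp) _.
  rewrite ler_pdivlMr // /normtheta; apply: le_trans (_ : supnorm phi <= _).
    by rewrite ler_piMr // ltW.
  by rewrite lerDl.
have [r' E'] : exists r', repo m (take m s) = Some r'.
  by apply: (repo_pre (w := r)); rewrite -Pr take_prefix.
have Pr' := repo_some E'; rewrite E' /=.
have agree : forall k, (k < m)%N -> sval r k = sval r' k.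
  by apply/prefixP; rewrite Pr' -Pr take_prefix.
apply: le_trans (_ : lipconst th' phi * th' ^+ m / th' ^+ m.+1 <= _).
  rewrite ler_pM2r ?invr_gt0 ?exprn_gt0 //; exact: lip_diff.
have -> : lipconst th' phi * th' ^+ m / th' ^+ m.+1 = lipconst th' phi / th'.
  rewrite exprS; field; rewrite expf_neq0 ?andbT //; exact: lt0r_neq0.
by rewrite ler_pM2r ?invr_gt0 // /normtheta lerDr.
Qed.

Lemma cabs_ind m s (w : S) : cabs (ind m s w) <= 1.
Proof.
rewrite /ind; case: ifP => _; first by rewrite cabsE Normc.normc1.
by rewrite cabs0 ler01.
Qed.

Lemma cabs_ind_diff m s (w w' : S) : cabs (ind m s w - ind m s w') <= 1.
Proof.
rewrite /ind; case: ifP => _; case: ifP => _.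
- by rewrite subrr cabs0 ler01.
- by rewrite subr0 cabsE Normc.normc1.
- by rewrite sub0r cabsN cabsE Normc.normc1.
- by rewrite subrr cabs0 ler01.
Qed.

Lemma nt_yy t i : th <= t -> t < 1 -> normtheta t (yy i) <= 2.
Proof.
move=> tt t1; have t0 : 0 < t by apply: lt_le_trans tt.
set m := blk i.
have thm : th ^+ m <= 1 by rewrite exprn_ile1 // ltW.
have thm0 : 0 <= th ^+ m by rewrite exprn_ge0 // ltW.
suff [h1 h2] : supnorm (yy i) <= 1 /\ lipconst t (yy i) <= 1.
  by rewrite /normtheta; lra.
split.
  apply: sup_le_c; first exact: ler01.
  move=> x [w _ <-]; rewrite /yy cabsM cabsR ger0_norm //.
  apply: le_trans (_ : th ^+ m * 1 <= _); last by rewrite mulr1.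
  by rewrite ler_wpM2l // cabs_ind.
apply: sup_le_c; first exact: ler01.
move=> x [w [w' [ne ->]]]; rewrite /dtheta.
set d := firstdiff w w'.
have td : 0 < t ^+ d by rewrite exprn_gt0.
rewrite ler_pdivrMr // mul1r /yy -mulrBr cabsM cabsR ger0_norm //.
case: (leqP m d) => md.
  have -> : ind m (wd i) w = ind m (wd i) w'.
    rewrite /ind; congr (if _ then _ else _); congr (_ == _).
    by apply/prefixP => k km; apply: fd_lt; apply: leq_trans md.
  by rewrite subrr cabs0 mulr0 ltW.
apply: le_trans (_ : th ^+ m * 1 <= _).
  by rewrite ler_wpM2l // cabs_ind_diff.
rewrite mulr1; apply: le_trans (_ : t ^+ m <= _).
  by apply: lerXn2r; rewrite ?nnegrE // ltW.
by apply: ler_wiXn2l; [exact: ltW|exact: ltW|exact: ltnW].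
Qed.


Lemma powle (x : R) k : 0 <= x -> x <= 1 -> (0 < k)%N -> x ^+ k <= x.
Proof. by move=> x0 x1 k1; have := ler_wiXn2l x0 x1 k1; rewrite expr1. Qed.

Lemma nt_rem t j (phi : S -> C) (eta : R) M : th <= t -> t < 1 -> 0 < eta -> eta <= 1 ->
  (0 < j)%N -> (M <= j)%N ->
  (forall m, (M <= m)%N -> var_le phi m ((th * eta) ^+ m)) ->
  normtheta t (fun w => phi w - Em j phi w) <= 3 * eta.
Proof.
move=> tt t1 e0 e1 j0 Mj HM; have t0 : 0 < t by apply: lt_le_trans tt.
set f := fun w => phi w - Em j phi w.
have te0 : 0 <= th * eta by rewrite mulr_ge0 // ltW.
have te1 : th * eta <= 1 by rewrite mulr_ile1 // ltW.
have F1 : forall w, cabs (f w) <= (th * eta) ^+ j.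
  move=> w; have [r [Er Pr]] := Em_rep j phi w; rewrite /f Er.
  apply: (HM j Mj) => k kj; by move/prefixP: Pr => ->.
have F2 : (th * eta) ^+ j <= eta.
  apply: le_trans (powle te0 te1 j0) _; by rewrite ler_piMl // ltW.
suff [h1 h2] : supnorm f <= eta /\ lipconst t f <= 2 * eta.
  by rewrite /normtheta; lra.
split.
  apply: sup_le_c; first exact: ltW.
  by move=> x [w _ <-]; apply: le_trans (F1 w) F2.
apply: sup_le_c; first by rewrite mulr_ge0 // ltW.
move=> x [w [w' [ne ->]]]; rewrite /dtheta.
set d := firstdiff w w'.
have td : 0 < t ^+ d by rewrite exprn_gt0.
rewrite ler_pdivrMr //.
have thd : forall k, th ^+ k <= t ^+ k.
  by move=> k; apply: lerXn2r; rewrite ?nnegrE // ltW.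
case: (leqP j d) => jd.
  have -> : f w - f w' = phi w - phi w'.
    rewrite /f (Em_loc phi (w' := w')); first ring.
    by apply/prefixP => k kj; apply: fd_lt; apply: leq_trans jd.
  apply: le_trans (var_fd (HM d (leq_trans Mj jd))) _.
  rewrite exprMn; apply: le_trans (_ : t ^+ d * eta <= _).
    apply: ler_pM; [exact: exprn_ge0 (ltW th0)|exact: exprn_ge0 (ltW e0)|exact: thd|].
    by apply: powle => //; [exact: ltW|exact: leq_trans j0 jd].
  rewrite mulrC ler_wpM2r ?exprn_ge0 ?ltW //; lra.
apply: le_trans (cabsB _ _) _.
apply: le_trans (_ : 2 * (th * eta) ^+ j <= _).
  by have := F1 w; have := F1 w'; lra.
rewrite -mulrA ler_wpM2l ?ler0n // exprMn [eta * _]mulrC.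
apply: ler_pM; [exact: exprn_ge0 (ltW th0)|exact: exprn_ge0 (ltW e0)| |exact: powle (ltW e0) e1 j0].
apply: le_trans (thd j) _.
by apply: ler_wiXn2l; [exact: ltW|exact: ltW|exact: ltnW].
Qed.


End Params.

Lemma seminorm_add (p1 p2 : (S -> C) -> R) : seminormV p1 -> seminormV p2 ->
  seminormV (fun f => p1 f + p2 f).
Proof.
move=> [a1 [b1 c1]] [a2 [b2 c2]]; split; first by move=> f Hf; rewrite addr_ge0 ?a1 ?a2.
split; first by move=> f g Hf Hg; have := b1 f g Hf Hg; have := b2 f g Hf Hg; lra.
by move=> c f Hf; rewrite c1 // c2 // mulrDr.
Qed.

Lemma inV0 : inV (fun _ : S => 0 : C).
Proof. by apply: (inV_loc (j := 0)). Qed.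

Lemma p_zero (p : (S -> C) -> R) : seminormV p -> p (fun _ => 0) = 0.
Proof.
move=> [_ [_ pZ]]; have h := pZ 0 _ inV0; rewrite cabs0 !mul0r in h.
exact: h.
Qed.

Lemma p_sum (p : (S -> C) -> R) (c : nat -> C) (g : nat -> S -> C) (r : seq nat) b :
  seminormV p -> (forall i, i \in r -> forall w w', prefix b w = prefix b w' -> g i w = g i w') ->
  p (fun w => \sum_(i <- r) c i * g i w) <= \sum_(i <- r) cabs (c i) * p (g i).
Proof.
move=> sp; have [p0 [pD pZ]] := sp; elim: r => [|a r IH] H.
  rewrite big_nil; under eq_fun do rewrite big_nil; by rewrite p_zero.
rewrite big_cons.
have Hr : forall i, i \in r -> forall w w', prefix b w = prefix b w' -> g i w = g i w'.
  by move=> i ir; apply: H; rewrite inE ir orbT.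
have Ha : forall w w', prefix b w = prefix b w' -> g a w = g a w'.
  by apply: H; rewrite inE eqxx.
have e : (fun w => \sum_(i <- a :: r) c i * g i w) =
   (fun w => c a * g a w) \+ (fun w => \sum_(i <- r) c i * g i w).
  by apply: funext => w; rewrite big_cons.
have iga : inV (g a) by apply: inV_loc Ha.
have ira : inV (fun w => \sum_(i <- r) c i * g i w).
  apply: (inV_loc (j := b)) => w w' E; apply: eq_big_seq => i ir.
  by rewrite (Hr i ir w w').
rewrite e; apply: le_trans (pD _ _ (inV_scale (c a) iga) ira) _.
rewrite pZ //; apply: lerD => //; exact: IH.
Qed.

Lemma half_pow_small (d : R) : 0 < d -> exists b, (1 / 2 : R) ^+ b <= d.
Proof.
move=> d0; set k := Num.bound (d^-1).
have hk : d^-1 < k%:R by apply: archi_boundP; rewrite invr_ge0 ltW.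
have k0 : 0 < (k%:R : R) by apply: le_lt_trans hk; rewrite invr_ge0 ltW.
exists k; apply: le_trans (_ : (k%:R)^-1 <= _).
  rewrite expr_div_n expr1n div1r -natrX lef_pV2 ?posrE ?ltr0n ?expn_gt0 //.
  by rewrite ler_nat ltnW // ltn_expl.
rewrite -[d]invrK lef_pV2 ?posrE ?invr_gt0 //; exact: ltW.
Qed.

End Main.

Lemma foldmin (R : realType) (ths : seq R) :
  all (fun t => (0 < t) && (t < 1)) ths ->
  let th := foldr Num.min (1 / 2) ths in
  0 < th /\ th < 1 /\ forall t, t \in ths -> th <= t /\ t < 1.
Proof.
elim: ths => [|a ths IH] /=.
  by move=> _; split; [lra|split; [lra|]].
move=> /andP[/andP[a0 a1] /IH [h0 [h1 h2]]]; split; first by rewrite lt_min a0.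
split; first by rewrite gt_min h1 orbT.
move=> t; rewrite inE => /orP[/eqP ->|tin]; first by rewrite ge_min lexx.
by have [h3 h4] := h2 t tin; rewrite ge_min h3 orbT.
Qed.

Section Final.
Variables (R : realType) (n : nat) (A : 'M[int]_(n.+2)).
Local Notation N := n.+2.
Local Notation S := (Sigma A).
Local Notation C := (R[i]).
Variables (p : (S -> C) -> R) (ths : seq R) (K : R).
Hypotheses (sp : seminormV p) (thsP : all (fun t => (0 < t) && (t < 1)) ths)
  (pK : forall phi, inV phi -> p phi <= K * \sum_(t <- ths) normtheta t phi).

Definition th := foldr Num.min (1 / 2) ths.
Definition th' := th / (2 * N%:R).
Definition Kp := Num.max K 1.
Definition q (phi : S -> C) := p phi + normtheta th' phi.

Lemma thF : 0 < th /\ th < 1 /\ forall t, t \in ths -> th <= t /\ t < 1.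
Proof. exact: foldmin thsP. Qed.

Lemma th0 : 0 < th. Proof. by case: thF. Qed.
Lemma th1 : th < 1. Proof. by case: thF => _ []. Qed.
Lemma thin t : t \in ths -> th <= t /\ t < 1. Proof. by case: thF => _ [] _; apply. Qed.

Lemma N0 : 0 < (N%:R : R). Proof. by rewrite ltr0n. Qed.

Lemma twoN0 : 0 < 2 * (N%:R : R).
Proof. by apply: mulr_gt0; [lra | exact: N0]. Qed.

Lemma th'0 : 0 < th'.
Proof. by rewrite /th' divr_gt0 ?th0 ?twoN0. Qed.

Lemma th'le : th' <= th.
Proof.
rewrite /th' ler_pdivrMr ?twoN0 //.
rewrite ler_peMr ?(ltW th0) //.
have : 1 <= (N%:R : R) by rewrite ler1n.
lra.
Qed.

Lemma th'1 : th' < 1. Proof. exact: le_lt_trans th'le th1. Qed.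

Lemma thr : th' / th * N%:R <= 1 / 2.
Proof.
have t0 := th0; have n0 := N0.
rewrite /th' le_eqVlt; apply/orP; left; apply/eqP; field.
apply/andP; split; first exact: lt0r_neq0.
by apply: lt0r_neq0; have := ler0n R n; lra.
Qed.

Lemma Kp1 : 1 <= Kp. Proof. by rewrite /Kp le_max lexx orbT. Qed.
Lemma Kp0 : 0 <= Kp. Proof. apply: le_trans Kp1; exact: ler01. Qed.

Lemma sum_nt_ge0 (phi : S -> C) : 0 <= \sum_(t <- ths) normtheta t phi.
Proof.
rewrite big_seq; apply: sumr_ge0 => t tin; apply: normtheta_ge0.
by move/allP: thsP => /(_ t tin) /andP[].
Qed.

Lemma pbound (f : S -> C) c : inV f -> (forall t, t \in ths -> normtheta t f <= c) ->
  p f <= Kp * \sum_(t <- ths) c.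
Proof.
move=> Hf Hc; apply: le_trans (pK Hf) _.
apply: le_trans (_ : Kp * \sum_(t <- ths) normtheta t f <= _).
  by rewrite ler_wpM2r ?sum_nt_ge0 // /Kp le_max lexx.
rewrite ler_wpM2l ?Kp0 // [X in _ <= X]big_seq [X in X <= _]big_seq.
by apply: ler_sum => t tin; apply: Hc.
Qed.

Lemma q_semi : seminormV q.
Proof. exact: seminorm_add sp (normtheta_seminorm A th'0 th'1). Qed.

Lemma q_cont : continuous_seminorm q.
Proof.
split; first exact: q_semi.
exists (th' :: ths), Kp; split; first by rewrite /= th'0 th'1.
move=> phi Hp; rewrite big_cons /q mulrDr.
have := pK Hp; have := sum_nt_ge0 phi; have := normtheta_ge0 phi th'0.
have := Kp1; rewrite /Kp.
set a := normtheta th' phi; set s := \sum_(t <- ths) _; set k := Num.max K 1.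
have Kk : K <= k by rewrite /k le_max lexx.
move=> k1 a0 s0 h.
have : K * s <= k * s by rewrite ler_wpM2r.
have : a <= k * a by rewrite ler_peMl.
lra.
Qed.

Lemma p_le_q (phi : S -> C) : inV phi -> p phi <= q phi.
Proof. by move=> _; rewrite /q lerDl normtheta_ge0 // th'0. Qed.


Lemma q_ge0 (phi : S -> C) : inV phi -> 0 <= q phi.
Proof. by move=> Hp; rewrite /q addr_ge0 ?normtheta_ge0 ?th'0 //; case: sp => h _; exact: h. Qed.

Lemma cabsN1 : cabs (-1 : C) = 1.
Proof. by rewrite cabsN cabsE Normc.normc1. Qed.

Lemma q_nuclear : nuclear_natural_map q p.
Proof.
have [p0 [pD pZ]] := sp.
pose lm := lam n th th'.
pose x' := fun i (phi : S -> C) => xp th' i phi.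
pose y := fun (i k : nat) => yy (A := A) th i.
have yloc : forall i k b, blk n i = b -> forall w w' : S, prefix b w = prefix b w' -> y i k w = y i k w'.
  by move=> i k b E w w'; rewrite /y /yy /ind E => ->.
have yV : forall i k, inV (y i k).
  by move=> i k; apply: (inV_loc (j := blk n i)); apply: yloc.
set B' := Kp * \sum_(t <- ths) (2 : R).
have yB : forall i k, p (y i k) <= B'.
  move=> i k; apply: pbound => // t tin.
  by have [h1 h2] := thin tin; exact: (nt_yy A th0 th1 i h1 h2).
have xB : forall i (phi : S -> C), inV phi -> cabs (x' i phi) <= q phi / th'.
  move=> i phi Hp; apply: le_trans (xp_bound th'0 th'1 i Hp) _.
  by rewrite ler_pM2r ?invr_gt0 ?th'0 // /q lerDr p0.
exists lm, x', y.
split; first by exists 2 => M; exact: lam_sum th0 th'0 thr M.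
split.
  move=> i; split.
    by move=> phi psi _ _; rewrite /x' /xp Dm_lin mulrDl.
  by move=> c phi _; rewrite /x' /xp Dm_scale mulrA.
split.
  exists (th'^-1) => i phi Hp; rewrite mulrC; exact: xB.
split; first exact: yV.
split.
  move=> i eps e0; exists 0%N => k l _ _.
  have -> : y i k \- y i l = (fun _ => 0) by apply: funext => w; rewrite /= subrr.
  by rewrite p_zero // ltW.
split.
  by exists B' => i; exists 0%N => k _; apply: yB.
move=> phi Hp eps e0.
set Z := Kp * \sum_(t <- ths) (1 : R).
have Z0 : 0 <= Z.
  by rewrite mulr_ge0 ?Kp0 // big_seq sumr_ge0 // => t _; exact: ler01.
have B'0 : 0 <= B'.
  by rewrite mulr_ge0 ?Kp0 // big_seq sumr_ge0 // => t _; lra.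
set W := q phi / th' * B'.
have W0 : 0 <= W by rewrite mulr_ge0 // divr_ge0 ?q_ge0 // ltW // th'0.
set u := eps / (6 * (Z + 1)).
have u0 : 0 < u by rewrite divr_gt0 // mulr_gt0 //; lra.
have uZ : u * (Z + 1) = eps / 6.
  rewrite /u; field; apply: lt0r_neq0; lra.
set eta := Num.min 1 u.
have eta0 : 0 < eta by rewrite lt_min ltr01 u0.
have eta1 : eta <= 1 by rewrite ge_min lexx.
have etau : eta <= u by rewrite ge_min lexx orbT.
have etaZ : eta * Z <= u * (Z + 1).
  by apply: ler_pM => //; [exact: ltW| lra].
have [Me HMe] := Hp (th * eta) (mulr_gt0 th0 eta0).
have dpos : 0 < eps / (2 * (W + 1)) by rewrite divr_gt0 // mulr_gt0 //; lra.
have [b0 Hb0] := half_pow_small dpos.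
have Wd : eps / (2 * (W + 1)) * W <= eps / 2.
  have W1 : 0 < W + 1 by lra.
  have e : eps / (2 * (W + 1)) * W = eps / 2 * (W / (W + 1)).
    by field; apply: lt0r_neq0.
  rewrite e; apply: ler_piMr; first by rewrite divr_ge0 ?ltW.
  by rewrite ler_pdivrMr // mul1r; lra.
set bmin := maxn (maxn Me.+1 2) b0.
exists (Cb n bmin) => M HM; exists 0%N => k _.
set b := blk n M.
have /andP[hb1 hb2] := blkP n M.
have bge : (bmin <= b)%N.
  rewrite leqNgt; apply/negP => bb.
  have := leq_trans hb2 (Cb_le n bb); rewrite leqNgt; move/negP; apply.
  by rewrite ltnS.
have := bge; rewrite !geq_max => /andP[/andP[Meb b2] b0b].
set j := b.-1.
have bj : b = j.+1 by rewrite /j prednK // (leq_trans _ b2).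
have j0 : (0 < j)%N by rewrite -ltnS -bj.
have Mej : (Me <= j)%N by rewrite -ltnS -bj.
have blkb : forall i, i \in index_iota (Cb n b) M -> blk n i = b.
  move=> i; rewrite mem_index_iota => /andP[i1 i2]; apply: blk_eq.
  by rewrite i1 /= (leq_trans i2 (ltnW hb2)).
have dec : (fun w => phi w - \sum_(i < M) lm i * x' i phi * y i k w) =
   (fun w => phi w - Em j phi w) \+
   (fun w => (-1) * \sum_(i <- index_iota (Cb n b) M) (lm i * x' i phi) * y i k w).
  apply: funext => w /=.
  rewrite -(big_mkord xpredT (fun i => lm i * x' i phi * y i k w)) (@big_cat_nat _ _ _ (Cb n b)) //= big_mkord.
  rewrite (sum_terms th0 th'0) bj /=; ring.
have inV1 : inV (fun w => phi w - Em j phi w).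
  have e : (fun w => phi w - Em j phi w) = phi \+ (fun w => (-1) * Em j phi w).
    by apply: funext => w /=; ring.
  have h : inV (fun w => Em j phi w).
    by apply: (inV_loc (j := j)) => w w' E; apply: Em_loc.
  by rewrite e; exact: (inV_add Hp (inV_scale (-1) h)).
have inV2 : inV (fun w => \sum_(i <- index_iota (Cb n b) M) (lm i * x' i phi) * y i k w).
  apply: (inV_loc (j := b)) => w w' E; apply: eq_big_seq => i ii.
  by rewrite (yloc i k b (blkb i ii) w w' E).
rewrite dec; apply: le_trans (pD _ _ inV1 (inV_scale (-1) inV2)) _.
rewrite pZ // cabsN1 mul1r.
have bound1 : p (fun w => phi w - Em j phi w) <= 3 * eta * Z.
  apply: le_trans (pbound (c := 3 * eta) inV1 _) _.
    move=> t tin; have [h1 h2] := thin tin.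
    exact: (nt_rem th0 th1 h1 h2 eta0 eta1 j0 Mej (fun m h => HMe m h)).
  have -> : \sum_(t <- ths) (3 * eta) = 3 * eta * \sum_(t <- ths) (1 : R).
    by rewrite mulr_sumr; apply: eq_bigr => t _; rewrite mulr1.
  by rewrite /Z mulrCA lexx.
have bound2 : p (fun w => \sum_(i <- index_iota (Cb n b) M) (lm i * x' i phi) * y i k w)
    <= (1 / 2) ^+ b * W.
  apply: le_trans (p_sum (b := b) _ sp _) _.
    by move=> i ii; apply: yloc; apply: blkb.
  apply: le_trans (_ : \sum_(i <- index_iota (Cb n b) M) cabs (lm i) * W <= _).
    apply: ler_sum => i _; rewrite cabsM -mulrA ler_wpM2l ?cabs_ge0 //.
    apply: ler_pM; [exact: cabs_ge0| exact: p0| exact: xB| exact: yB].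
  rewrite -mulr_suml ler_wpM2r //.
  apply: le_trans (block_lam th0 th'0 thr b).
  rewrite [X in _ <= X](@big_cat_nat _ _ _ M) //=; last exact: ltnW.
  by rewrite lerDl big_seq sumr_ge0 // => i _; exact: cabs_ge0.
have hb : (1 / 2 : R) ^+ b * W <= eps / 2.
  apply: le_trans Wd; rewrite ler_wpM2r //; apply: le_trans Hb0.
  by apply: ler_wiXn2l => //; lra.
lra.
Qed.

End Final.

Theorem theoremB1 (R : realType) (n : nat) (A : 'M[int]_(n.+2)) :
  zero_one A -> aperiodic A -> V_nuclear R A.
Proof.
move=> _ _ p [sp [ths [K [thsP pK]]]].
exists (q p ths); split; first exact: (q_cont sp thsP pK).
split; first by move=> phi Hp; apply: p_le_q.
exact: (q_nuclear sp thsP pK).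
Qed.
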